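(* Let $R$ be a commutative ring, $M$ an $R$-module having at least one prime submodule, $X=\mathrm{Spec}(M)$, and $N$ an $R$-module. For each $P\in X$, the stalk $\mathcal{A}(N,M)_P=\varinjlim_{P\in U}\mathcal{A}(N,M)(U)$ is isomorphic to $N_{\mathfrak p}$, where $\mathfrak p=(P:M)$.
   Context: For a submodule $L$ of an $R$-module $M$, $(L:M)=\{r\in R\mid rM\subseteq L\}$. A submodule $P$ of $M$ is prime if $P\neq M$ and whenever $rm\in P$ ($r\in R$, $m\in M$) then $r\in (P:M)$ or $m\in P$; then $(P:M)$ is a prime ideal. $\mathrm{Spec}(M)$ is the set of prime submodules. For $L\le M$, $V(L)=\{P\in X\mid (P:M)\supseteq (L:M)\}$; these are the closed sets of the Zariski topology on $X$. For open $U\subseteq X$, $\mathrm{Supp}(U)=\{(P:M)\mid P\in U\}$. The sheaf $\mathcal{A}(N,M)$ on $X$: $\mathcal{A}(N,M)(U)$ is the set of families $(\gamma_{\mathfrak p})_{\mathfrak p\in\mathrm{Supp}(U)}\in\prod_{\mathfrak p\in\mathrm{Supp}(U)}N_{\mathfrak p}$ such that for each $Q\in U$ there exist an open neighbourhood $W\subseteq U$ of $Q$ and $s\in R$, $m\in N$ with $s\notin (P:M)$ and $\gamma_{(P:M)}=m/s\in N_{(P:M)}$ for every $P\in W$; restriction maps restrict families, and $\mathcal{A}(N,M)(\emptyset)=0$. *)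

(* Defs.v *)
From mathcomp Require Import all_boot all_algebra.
Set Implicit Arguments.
Unset Strict Implicit.
Unset Printing Implicit Defensive.
Import GRing.Theory.
Local Open Scope ring_scope.

Section ModuleSpec.
Variable R : comPzRingType.

Definition is_submodule (M : lmodType R) (L : M -> Prop) : Prop :=
  L 0 /\ (forall x y, L x -> L y -> L (x + y)) /\
  (forall (r : R) x, L x -> L (r *: x)).

Definition colon (M : lmodType R) (L : M -> Prop) : R -> Prop :=
  fun r => forall m : M, L (r *: m).

Definition prime_submodule (M : lmodType R) (P : M -> Prop) : Prop :=
  is_submodule P /\ (exists m, ~ P m) /\
  (forall (r : R) (m : M), P (r *: m) -> colon P r \/ P m).

Definition spec (M : lmodType R) := {P : M -> Prop | prime_submodule P}.

Definition pt_ideal (M : lmodType R) (P : spec M) : R -> Prop :=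
  colon (proj1_sig P).

Definition Vset (M : lmodType R) (L : M -> Prop) : spec M -> Prop :=
  fun P => forall r, colon L r -> pt_ideal P r.

Definition zariski_open (M : lmodType R) (U : spec M -> Prop) : Prop :=
  exists L : M -> Prop, is_submodule L /\ forall P, U P <-> ~ Vset L P.

Definition loc_rel (N : lmodType R) (p : R -> Prop) (a b : N * R) : Prop :=
  exists t : R, ~ p t /\ t *: (b.2 *: a.1 - a.2 *: b.1) = 0.

(* a fraction a.1 / a.2 is an element of N_p *)
Definition loc_elt (N : lmodType R) (p : R -> Prop) (a : N * R) : Prop :=
  ~ p a.2.

Definition loc_add (N : lmodType R) (a b : N * R) : N * R :=
  (b.2 *: a.1 + a.2 *: b.1, a.2 * b.2).

Definition loc_scale (N : lmodType R) (r : R) (a : N * R) : N * R :=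
  (r *: a.1, a.2).

(* A family (gamma_p)_{p in Supp(U)} is encoded by a function g on ideals;
   only its values at p = (Q:M), Q in U, matter. *)
Definition is_section (M N : lmodType R) (U : spec M -> Prop)
  (g : (R -> Prop) -> N * R) : Prop :=
  (forall Q, U Q -> loc_elt (pt_ideal Q) (g (pt_ideal Q))) /\
  (forall Q, U Q -> exists W : spec M -> Prop,
     zariski_open W /\ (forall Q', W Q' -> U Q') /\ W Q /\
     exists (s : R) (m : N), forall Q', W Q' ->
       ~ pt_ideal Q' s /\ loc_rel (pt_ideal Q') (g (pt_ideal Q')) (m, s)).

Definition germ_raw (M N : lmodType R) :=
  ((spec M -> Prop) * ((R -> Prop) -> N * R))%type.

(* (U, gamma) with U an open neighbourhood of P and gamma in A(N,M)(U) *)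
Definition is_germ (M N : lmodType R) (P : spec M) (x : germ_raw M N) : Prop :=
  zariski_open x.1 /\ x.1 P /\ is_section x.1 x.2.

(* equality in the direct limit: equal restrictions on a smaller nbhd *)
Definition germ_eq (M N : lmodType R) (P : spec M) (x y : germ_raw M N) : Prop :=
  exists W : spec M -> Prop, zariski_open W /\ W P /\
    (forall Q, W Q -> x.1 Q /\ y.1 Q) /\
    (forall Q, W Q -> loc_rel (pt_ideal Q) (x.2 (pt_ideal Q)) (y.2 (pt_ideal Q))).

Definition germ_add (M N : lmodType R) (x y : germ_raw M N) : germ_raw M N :=
  (fun Q => x.1 Q /\ y.1 Q, fun p => loc_add (x.2 p) (y.2 p)).

Definition germ_scale (M N : lmodType R) (r : R) (x : germ_raw M N) : germ_raw M N :=
  (x.1, fun p => loc_scale r (x.2 p)).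

(* f induces an R-module isomorphism  A(N,M)_P  ~=  N_{(P:M)}  :
   well defined and injective, surjective, additive and R-linear,
   all modulo the equivalence relations defining the two quotients. *)
Definition stalk_loc_iso (M N : lmodType R) (P : spec M)
  (f : germ_raw M N -> N * R) : Prop :=
  let p := pt_ideal P in
  (forall x, is_germ P x -> loc_elt p (f x)) /\
  (forall x y, is_germ P x -> is_germ P y ->
     (germ_eq P x y <-> loc_rel p (f x) (f y))) /\
  (forall a, loc_elt p a -> exists x, is_germ P x /\ loc_rel p (f x) a) /\
  (forall x y, is_germ P x -> is_germ P y ->
     loc_rel p (f (germ_add x y)) (loc_add (f x) (f y))) /\
  (forall (r : R) x, is_germ P x ->
     loc_rel p (f (germ_scale r x)) (loc_scale r (f x))).

End ModuleSpec.

(* Main.v *)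
Require Import Defs.
From mathcomp Require Import all_boot all_algebra.
From mathcomp Require Import ring.
From Stdlib Require Import Classical.
Set Implicit Arguments.
Unset Strict Implicit.
Import GRing.Theory.
Local Open Scope ring_scope.

Section Aux.
Variable R : comPzRingType.

Lemma pt_mul (M : lmodType R) (Q : spec M) (a b : R) :
  ~ pt_ideal Q a -> ~ pt_ideal Q b -> ~ pt_ideal Q (a * b).
Proof.
rewrite /pt_ideal; case: Q => P [_ [_ Hp]] /= Ha Hb Hab; apply: Hb => m.
case: (Hp a (b *: m)).
- by rewrite scalerA; apply: Hab.
- by move=> /Ha.
- by [].
Qed.

Lemma pt_one (M : lmodType R) (Q : spec M) : ~ pt_ideal Q 1.
Proof.
rewrite /pt_ideal; case: Q => P [S1 [[m Hm] S2]] /= H; apply: Hm; by have := H m; rewrite scale1r.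
Qed.

Lemma loc_refl (M N : lmodType R) (Q : spec M) (a : N * R) :
  loc_rel (pt_ideal Q) a a.
Proof. exists 1; split; first exact: pt_one. by rewrite subrr scaler0. Qed.

Lemma loc_sym (N : lmodType R) (p : R -> Prop) (a b : N * R) :
  loc_rel p a b -> loc_rel p b a.
Proof.
case=> t [Ht H]; exists t; split => //.
by rewrite -opprB scalerN H oppr0.
Qed.

Lemma loc_trans (M N : lmodType R) (Q : spec M) (a b c : N * R) :
  ~ pt_ideal Q b.2 ->
  loc_rel (pt_ideal Q) a b -> loc_rel (pt_ideal Q) b c -> loc_rel (pt_ideal Q) a c.
Proof.
move=> Hb [t [Ht H1]] [u [Hu H2]]; exists (t * u * b.2); split.
  by apply: pt_mul => //; apply: pt_mul.
have -> : (t * u * b.2) *: (c.2 *: a.1 - a.2 *: c.1) =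
   (u * c.2) *: (t *: (b.2 *: a.1 - a.2 *: b.1)) +
   (t * a.2) *: (u *: (c.2 *: b.1 - b.2 *: c.1)).
  rewrite !scalerBr !scalerA.
  have -> : u * c.2 * t * b.2 = t * u * b.2 * c.2 by ring.
  have -> : t * a.2 * u * b.2 = t * u * b.2 * a.2 by ring.
  have -> : t * a.2 * u * c.2 = u * c.2 * t * a.2 by ring.
  by rewrite addrA subrK.
by rewrite H1 H2 !scaler0 addr0.
Qed.

Lemma open_D (M : lmodType R) (t : R) :
  zariski_open (fun Q : spec M => ~ pt_ideal Q t).
Proof.
exists (fun x => exists m, x = t *: m); split.
  split; first by exists 0; rewrite scaler0.
  split.
    by move=> x y [m ->] [m' ->]; exists (m + m'); rewrite scalerDr.
  by move=> r x [m ->]; exists (r *: m); rewrite !scalerA mulrC.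
move=> Q; split.
  by move=> Ht HV; apply: Ht; apply: HV => m; exists m.
move=> HV Ht; apply: HV => r Hr m.
case: (Hr m) => m' ->; exact: Ht.
Qed.

Lemma open_I (M : lmodType R) (U1 U2 : spec M -> Prop) :
  zariski_open U1 -> zariski_open U2 -> zariski_open (fun Q => U1 Q /\ U2 Q).
Proof.
move=> [L1 [S1 H1]] [L2 [S2 H2]].
exists (fun x => L1 x /\ L2 x); split.
  case: S1 => [a1 [b1 c1]]; case: S2 => [a2 [b2 c2]].
  split; first by [].
  split; first by move=> x y [? ?] [? ?]; split; [apply: b1|apply: b2].
  by move=> r x [? ?]; split; [apply: c1|apply: c2].
move=> Q; rewrite H1 H2; split.
  move=> [N1 N2] V.
  apply: N1 => r1 Hr1; apply: NNPP => nr1.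
  apply: N2 => r2 Hr2; apply: NNPP => nr2.
  have HV : pt_ideal Q (r1 * r2).
    apply: V => m; split.
      by rewrite -scalerA; apply: Hr1.
    by rewrite mulrC -scalerA; apply: Hr2.
  exact: (pt_mul nr1 nr2 HV).
move=> NV; split.
  by move=> V; apply: NV => r Hr; apply: V => m; case: (Hr m).
by move=> V; apply: NV => r Hr; apply: V => m; case: (Hr m).
Qed.

End Aux.

Theorem proposition3p2 (R : comPzRingType) (M N : lmodType R)
  (hM : exists P : M -> Prop, prime_submodule P) (P : spec M) :
  exists f : germ_raw M N -> N * R, stalk_loc_iso P f.
Proof.
exists (fun x => x.2 (pt_ideal P)).
split; first by move=> x [_ [HP [Hs _]]]; apply: Hs.
split.
  move=> x y [Ox [Px [Ex Sx]]] [Oy [Py [Ey Sy]]]; split.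
    by move=> [W [_ [WP [_ HW]]]]; apply: HW.
  move=> Hxy.
  case: (Sx P Px) => [W1 [O1 [S1 [W1P [s1 [m1 H1]]]]]].
  case: (Sy P Py) => [W2 [O2 [S2 [W2P [s2 [m2 H2]]]]]].
  have Hm : loc_rel (pt_ideal P) (m1, s1) (m2, s2).
    case: (H1 P W1P) => _ A1; case: (H2 P W2P) => _ A2.
    apply: (loc_trans (Ey P Py)); last exact: A2.
    apply: (loc_trans (Ex P Px)); last exact: Hxy.
    exact: loc_sym.
  case: Hm => [u [Hu Eu]].
  exists (fun Q => (W1 Q /\ W2 Q) /\ ~ pt_ideal Q u).
  split; first by apply: open_I; [apply: open_I|apply: open_D].
  split; first by [].
  split; first by move=> Q [[A B] _]; split; [apply: S1|apply: S2].
  move=> Q [[A B] C].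
  case: (H1 Q A) => n1 B1; case: (H2 Q B) => n2 B2.
  apply: (loc_trans (b := (m2, s2))) => //.
    apply: (loc_trans (b := (m1, s1))) => //.
    by exists u; split.
  exact: loc_sym.
split.
  move=> [m s] Hs.
  exists (fun Q => ~ pt_ideal Q s, fun _ => (m, s)); split; last exact: loc_refl.
  split; first exact: open_D.
  split; first exact: Hs.
  split; first by move=> Q HQ.
  move=> Q HQ; exists (fun Q => ~ pt_ideal Q s); split; first exact: open_D.
  split; first by [].
  split; first by [].
  by exists s, m => Q' HQ'; split => //; apply: loc_refl.
split; first by move=> x y _ _; apply: loc_refl.
by move=> r x _; apply: loc_refl.
Qed.
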